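(* Fix a positive integer $N$ and a real $c>0$. For each integer $K\ge2$ let $M_K$ be a positive integer, with $M_K/(KN)\to c$ as $K\to\infty$, and let $$d^*_\mathrm{sum}(K)=\min\left\{\frac{3M_K}{2},\ \max\left\{M_K+\frac{5M_KN}{9M_K+N},\ \frac{\sqrt{3K}N}{2}\right\},\ M_K+\frac{KN^2}{3M_K},\ KN\right\}$$ be the achievable total DoF of the symmetric multi-relay MIMO Y channel with three $M_K$-antenna users and $K$ relays with $N$ antennas each. Then, with $N_\mathrm{total}=KN$, $\lim_{K\to\infty}\frac{d^*_\mathrm{sum}(K)}{N_\mathrm{total}}=\min\{c,1\}$, i.e. asymptotically $\frac{d^*_\mathrm{sum}}{N_\mathrm{total}}=\min\left\{\frac{M}{N_\mathrm{total}},1\right\}$.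
   Context: In the symmetric multi-relay MIMO Y channel (three users with $M$ antennas each exchanging messages pairwise via $K$ half-duplex relays with $N$ antennas each), $d^*_\mathrm{sum}$ denotes the total DoF shown achievable in the paper: $d^*_\mathrm{sum}=\min\{\frac{3M}{2},\max\{M+\frac{5MN}{9M+N},\frac{\sqrt{3K}N}{2}\},M+\frac{KN^2}{3M},KN\}$. $N_\mathrm{total}=KN$ is the total number of relay antennas. *)

(* Defs.v *)
From Stdlib Require Import Reals.
From Coquelicot Require Import Coquelicot.
Open Scope R_scope.

Definition dsum (M K N : R) : R :=
  Rmin (Rmin (Rmin (3 * M / 2)
                   (Rmax (M + 5 * M * N / (9 * M + N)) (sqrt (3 * K) * N / 2)))
             (M + K * N ^ 2 / (3 * M)))
       (K * N).

(* Main.v *)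
Require Import Defs.
From Stdlib Require Import Reals Lra Lia.
From Coquelicot Require Import Coquelicot.
Open Scope R_scope.

Lemma Rmin_alt a b : Rmin a b = (a + b - Rabs (a - b)) / 2.
Proof. unfold Rmin, Rabs; destruct (Rle_dec a b), (Rcase_abs (a - b)); lra. Qed.
Lemma Rmax_alt a b : Rmax a b = (a + b + Rabs (a - b)) / 2.
Proof. unfold Rmax, Rabs; destruct (Rle_dec a b), (Rcase_abs (a - b)); lra. Qed.

Lemma lim_min (u v : nat -> R) (a b : R) : is_lim_seq u a -> is_lim_seq v b ->
  is_lim_seq (fun n => Rmin (u n) (v n)) (Rmin a b).
Proof.
  intros Hu Hv.
  assert (H := is_lim_seq_abs _ _ (is_lim_seq_minus' _ _ _ _ Hu Hv)).
  assert (H2 := is_lim_seq_minus' _ _ _ _ (is_lim_seq_plus' _ _ _ _ Hu Hv) H).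
  assert (H3 := is_lim_seq_mult' _ _ _ _ H2 (is_lim_seq_const (/2))).
  rewrite Rmin_alt. eapply is_lim_seq_ext; [|exact H3].
  intros n; simpl; rewrite Rmin_alt; unfold Rdiv; reflexivity.
Qed.
Lemma lim_max (u v : nat -> R) (a b : R) : is_lim_seq u a -> is_lim_seq v b ->
  is_lim_seq (fun n => Rmax (u n) (v n)) (Rmax a b).
Proof.
  intros Hu Hv.
  assert (H := is_lim_seq_abs _ _ (is_lim_seq_minus' _ _ _ _ Hu Hv)).
  assert (H2 := is_lim_seq_plus' _ _ _ _ (is_lim_seq_plus' _ _ _ _ Hu Hv) H).
  assert (H3 := is_lim_seq_mult' _ _ _ _ H2 (is_lim_seq_const (/2))).
  rewrite Rmax_alt. eapply is_lim_seq_ext; [|exact H3].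
  intros n; simpl; rewrite Rmax_alt; unfold Rdiv; reflexivity.
Qed.

Lemma Rmin_div a b d : 0 < d -> Rmin a b / d = Rmin (a / d) (b / d).
Proof.
  intros Hd. rewrite !Rmin_alt.
  replace (a / d - b / d) with ((a - b) / d) by (field; lra).
  replace (Rabs ((a - b) / d)) with (Rabs (a - b) / d)
    by (unfold Rdiv; rewrite Rabs_mult, (Rabs_pos_eq (/ d)) by (left; apply Rinv_0_lt_compat; lra); reflexivity).
  field; lra.
Qed.
Lemma Rmax_div a b d : 0 < d -> Rmax a b / d = Rmax (a / d) (b / d).
Proof.
  intros Hd. rewrite !Rmax_alt.
  replace (a / d - b / d) with ((a - b) / d) by (field; lra).
  replace (Rabs ((a - b) / d)) with (Rabs (a - b) / d)
    by (unfold Rdiv; rewrite Rabs_mult, (Rabs_pos_eq (/ d)) by (left; apply Rinv_0_lt_compat; lra); reflexivity).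
  field; lra.
Qed.

Lemma lim_invk : is_lim_seq (fun n => / INR n) 0.
Proof.
  assert (H := is_lim_seq_inv _ _ is_lim_seq_INR). simpl in H. apply H. discriminate.
Qed.

Theorem corollary4 (N : nat) (c : R) (M : nat -> nat) :
  (0 < N)%nat ->
  0 < c ->
  (forall K : nat, (2 <= K)%nat -> (0 < M K)%nat) ->
  is_lim_seq (fun K : nat => INR (M K) / (INR K * INR N)) c ->
  is_lim_seq (fun K : nat => dsum (INR (M K)) (INR K) (INR N) / (INR K * INR N))
             (Rmin c 1).
Proof.
  intros HN Hc HM Hx.
  set (x := fun K : nat => INR (M K) / (INR K * INR N)) in *.
  set (e := fun K : nat => 5 * INR (M K) * INR N / (9 * INR (M K) + INR N) / (INR K * INR N)).
  set (s := fun K : nat => sqrt (3 / INR K) / 2).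
  set (t := fun K : nat => / 3 * / x K * / INR K).
  assert (Hn : 0 < INR N) by (apply lt_0_INR; exact HN).
  assert (Hev : eventually (fun K => Rmin (Rmin (Rmin (3/2 * x K) (Rmax (x K + e K) (s K)))
                 (x K + t K)) 1 = dsum (INR (M K)) (INR K) (INR N) / (INR K * INR N))).
  { exists 2%nat. intros K HK.
    assert (Hk : 0 < INR K) by (apply lt_0_INR; lia).
    assert (Hm : 0 < INR (M K)) by (apply lt_0_INR; apply HM; exact HK).
    assert (Hkn : 0 < INR K * INR N) by (apply Rmult_lt_0_compat; lra).
    unfold dsum. rewrite !Rmin_div, Rmax_div by exact Hkn.
    set (m := INR (M K)) in *. set (k := INR K) in *. set (n := INR N) in *.
    replace (3 * m / 2 / (k * n)) with (3/2 * x K) by (unfold x; fold m k n; field; lra).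
    replace ((m + 5 * m * n / (9 * m + n)) / (k * n)) with (x K + e K)
      by (unfold x, e; fold m k n; field; lra).
    replace (sqrt (3 * k) * n / 2 / (k * n)) with (s K).
    2:{ unfold s; fold k.
      assert (Hs : 0 <= sqrt (3 / k)) by apply sqrt_pos.
      assert (Hs2 : sqrt (3 / k) * sqrt (3 / k) = 3 / k)
        by (apply sqrt_sqrt; unfold Rdiv; apply Rmult_le_pos; [lra| left; apply Rinv_0_lt_compat; lra]).
      replace (3 * k) with ((k * sqrt (3 / k)) ^ 2).
      + rewrite sqrt_pow2 by (apply Rmult_le_pos; lra). field; lra.
      + replace ((k * sqrt (3 / k)) ^ 2) with (k * k * (sqrt (3 / k) * sqrt (3 / k))) by ring.
        rewrite Hs2. field; lra. }
    replace ((m + k * n ^ 2 / (3 * m)) / (k * n)) with (x K + t K)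
      by (unfold t, x; fold m k n; field; repeat split; lra).
    replace (k * n / (k * n)) with 1 by (field; lra).
    reflexivity. }
  apply (is_lim_seq_ext_loc _ _ _ Hev).
  assert (Hk0 := lim_invk).
  assert (He : is_lim_seq e 0).
  { apply (is_lim_seq_le_le_loc (fun _ => 0) e (fun K => 5 / 9 * / INR K)).
    - exists 2%nat. intros K HK.
      assert (Hk : 0 < INR K) by (apply lt_0_INR; lia).
      assert (Hm : 0 < INR (M K)) by (apply lt_0_INR; apply HM; exact HK).
      unfold e. split.
      + apply Rmult_le_pos; [|left; apply Rinv_0_lt_compat; apply Rmult_lt_0_compat; lra].
        apply Rmult_le_pos; [|left; apply Rinv_0_lt_compat; lra]. 
        apply Rmult_le_pos; lra.
      + replace (5 * INR (M K) * INR N / (9 * INR (M K) + INR N) / (INR K * INR N))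
          with (5 / 9 * / INR K * (9 * INR (M K) / (9 * INR (M K) + INR N))) by (field; lra).
        rewrite <- (Rmult_1_r (5 / 9 * / INR K)) at 2.
        apply Rmult_le_compat_l.
        * apply Rmult_le_pos; [lra| left; apply Rinv_0_lt_compat; lra].
        * apply (Rmult_le_reg_r (9 * INR (M K) + INR N)); [lra|].
          field_simplify; lra.
    - apply is_lim_seq_const.
    - assert (H := is_lim_seq_scal_l _ (5/9) _ Hk0). simpl in H. rewrite Rmult_0_r in H. exact H. }
  assert (Hs : is_lim_seq s 0).
  { assert (H1 := is_lim_seq_scal_l _ 3 _ Hk0). simpl in H1. rewrite Rmult_0_r in H1.
    assert (H2 := is_lim_seq_continuous sqrt _ 0 (continuity_pt_sqrt 0 (Rle_refl 0)) H1).
    rewrite sqrt_0 in H2.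
    assert (H3 := is_lim_seq_mult' _ _ _ _ H2 (is_lim_seq_const (/2))).
    rewrite Rmult_0_l in H3. eapply is_lim_seq_ext; [|exact H3].
    intros n; unfold s; simpl; unfold Rdiv; reflexivity. }
  assert (Ht : is_lim_seq t 0).
  { assert (Hi := is_lim_seq_inv _ _ Hx).
    assert (Hi' : is_lim_seq (fun K => / x K) (/ c)).
    { apply Hi. intros H; injection H; lra. }
    assert (H := is_lim_seq_mult' _ _ _ _ (is_lim_seq_mult' _ _ _ _ (is_lim_seq_const (/3)) Hi') Hk0).
    rewrite Rmult_0_r in H. exact H. }
  replace (Rmin c 1) with (Rmin (Rmin (Rmin (3/2 * c) (Rmax (c + 0) 0)) (c + 0)) 1).
  2:{ rewrite Rplus_0_r, Rmax_left by lra.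
      rewrite (Rmin_right (3/2*c) c) by lra. rewrite (Rmin_left c c) by lra. reflexivity. }
  apply lim_min; [|apply is_lim_seq_const].
  apply lim_min; [apply lim_min; [|apply lim_max]|].
  - assert (H := is_lim_seq_scal_l _ (3/2) _ Hx). simpl in H. exact H.
  - apply is_lim_seq_plus'; assumption.
  - exact Hs.
  - apply is_lim_seq_plus'; assumption.
Qed.
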